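(* Fix $0<p\le\infty$. Let $t(x_1,\dots,x_n)$ and $s(x_1,\dots,x_n)$ be terms built from variables $x_1,\dots,x_n$, constants $r\in[0,\infty]$, and the binary operations $\otimes,\otimes^*,\oplus_p,\oplus^*_p$. Suppose that $t(a_1,\dots,a_n)\le s(a_1,\dots,a_n)$ for all $a_1,\dots,a_n\in[0,\infty]$ (operations evaluated in $[0,\infty]$). Then in any counary calculus (with $p$-structures as below) that contains the rule EFQ ($0$ / $\Gamma\vdash\Delta$ for all cedents $\Gamma,\Delta$), the rule $$\frac{t(\Gamma_1\vdash\Delta_1,\dots,\Gamma_n\vdash\Delta_n)}{s(\Gamma_1\vdash\Delta_1,\dots,\Gamma_n\vdash\Delta_n)}$$ (obtained by substituting sequents for the variables and reading the operations as formal structure operations) is admissible.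
   Context: Alethic values: $[0,\infty]$ with its usual order. Conjunctive multiplication $\otimes$ is the usual product on $(0,\infty)$, with $0\otimes a=a\otimes 0=0$ for all $a\in[0,\infty]$ and $a\otimes\infty=\infty\otimes a=\infty$ for $a\in(0,\infty]$. Inversion: $0^*=\infty$, $\infty^*=0$, $a^*=1/a$ otherwise. Disjunctive multiplication $a\otimes^* b:=(a^*\otimes b^* )^*$. Sum $\oplus$ is ordinary addition with $a\oplus\infty=\infty$; harmonic sum $a\oplus^*b:=(a^*\oplus b^* )^*$. For $0<p<\infty$ (conventions $0^p=0$, $\infty^p=\infty$): $a\oplus_p b:=(a^p\oplus b^p)^{1/p}$, $a\oplus^*_p b:=(a^p\oplus^* b^p)^{1/p}$; for $p=\infty$: $a\oplus_\infty b:=\max(a,b)$, $a\oplus^*_\infty b:=\min(a,b)$. Quantitative ($p$-hard) calculi: fix a set of formulas; a sequent is $\Gamma\vdash\Delta$ with $\Gamma,\Delta$ finite multisets of formulas. Structures: $H::=(\Gamma\vdash\Delta)\mid r\mid H\otimes H\mid H\otimes^*H\mid H\oplus_pH\mid H\oplus^*_pH$, $r\in[0,\infty]$ (formal operations). A structure with no sequent is closed and evaluates in $[0,\infty]$ to its validity. A rule is a schema $H/H'$ (premise structure, conclusion structure); a calculus is a set of rules; it is counary if every rule's conclusion is a single sequent. Derivations are defined inductively: identity $H/H$; rule instances; vertical composition of derivations $H\to I$ and $I\to K$; for $\ast\in\{\otimes,\otimes^*,\oplus_p,\oplus^*_p\}$, from derivations $H_1\to K_1$ and $H_2\to K_2$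 a derivation $H_1\ast H_2\to K_1\ast K_2$. A closed derivation has closed top structure; its validity is the value of that top. The provability $\|K\|_R$ of a structure $K$ in calculus $R$ is the supremum of validities of closed derivations in $R$ with bottom structure $K$ ($0$ if none). A rule is admissible in $R$ if adding it to $R$ does not change the provability of any structure. *)

(* Defs.v *)
From HB Require Import structures.
From mathcomp Require Import all_boot all_order all_algebra.
From mathcomp Require Import finmap multiset.
From mathcomp Require Import boolp classical_sets reals constructive_ereal ereal exp.
Set Implicit Arguments. Unset Strict Implicit. Unset Printing Implicit Defensive.
Import Order.TTheory GRing.Theory Num.Theory.
Local Open Scope ring_scope.
Local Open Scope ereal_scope.

(* Alethic values [0,oo] are represented inside \bar R (nonnegativity is
   imposed explicitly where needed). *)
Section Alethic.
Variable R : realType.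

Definition ainv (a : \bar R) : \bar R :=
  match a with
  | x%:E => if x == 0%R then +oo else (x^-1)%:E
  | +oo => 0
  | -oo => 0 (* junk, never used on [0,oo] *)
  end.

(* conjunctive multiplication: 0 absorbs, then a*oo = oo for a > 0 *)
Definition atens (a b : \bar R) : \bar R :=
  if (a == 0) || (b == 0) then 0 else a * b.

Definition apar (a b : \bar R) : \bar R := ainv (atens (ainv a) (ainv b)).

Definition asum (a b : \bar R) : \bar R := a + b.
Definition ahsum (a b : \bar R) : \bar R := ainv (asum (ainv a) (ainv b)).

(* real power on [0,oo], with 0^q = 0 and oo^q = oo for 0 < q < oo *)
Definition apow (a : \bar R) (q : R) : \bar R :=
  match a with
  | x%:E => (powR x q)%:E
  | +oo => +oo
  | -oo => -oo
  end.

(* p is an element of (0,oo]; p = +oo stands for p = infinity *)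
Definition asum_p (p : \bar R) (a b : \bar R) : \bar R :=
  match p with
  | q%:E => apow (asum (apow a q) (apow b q)) (q^-1)
  | _ => maxe a b
  end.

Definition ahsum_p (p : \bar R) (a b : \bar R) : \bar R :=
  match p with
  | q%:E => apow (ahsum (apow a q) (apow b q)) (q^-1)
  | _ => mine a b
  end.

End Alethic.

Inductive aop := OTens | OPar | OSum | OHsum.

Definition aop_eval (R : realType) (p : \bar R) (o : aop) : \bar R -> \bar R -> \bar R :=
  match o with
  | OTens => @atens R
  | OPar => @apar R
  | OSum => asum_p p
  | OHsum => ahsum_p p
  end.

Inductive term (R : realType) (n : nat) :=
  | TVar of 'I_n
  | TCst of \bar R
  | TOp of aop & term R n & term R n.

Fixpoint term_nonneg (R : realType) (n : nat) (t : term R n) : Prop :=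
  match t with
  | TVar _ => True
  | TCst r => 0 <= r
  | TOp _ t1 t2 => term_nonneg t1 /\ term_nonneg t2
  end.

Fixpoint term_eval (R : realType) (p : \bar R) (n : nat) (a : 'I_n -> \bar R)
  (t : term R n) : \bar R :=
  match t with
  | TVar i => a i
  | TCst r => r
  | TOp o t1 t2 => aop_eval p o (term_eval p a t1) (term_eval p a t2)
  end.

(* structures over formulas F; cedents are finite multisets *)
Inductive struc (R : realType) (F : choiceType) :=
  | SSeq of multiset F & multiset F
  | SCst of \bar R
  | SOp of aop & struc R F & struc R F.
Arguments SSeq {R F}. Arguments SCst {R F}. Arguments SOp {R F}.
Arguments TVar {R n}. Arguments TCst {R n}. Arguments TOp {R n}.

Fixpoint struc_nonneg (R : realType) (F : choiceType) (H : struc R F) : Prop :=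
  match H with
  | SSeq _ _ => True
  | SCst r => 0 <= r
  | SOp _ H1 H2 => struc_nonneg H1 /\ struc_nonneg H2
  end.

Fixpoint closed (R : realType) (F : choiceType) (H : struc R F) : Prop :=
  match H with
  | SSeq _ _ => False
  | SCst _ => True
  | SOp _ H1 H2 => closed H1 /\ closed H2
  end.

(* value of a structure; only meaningful for closed structures *)
Fixpoint struc_eval (R : realType) (F : choiceType) (p : \bar R) (H : struc R F)
  : \bar R :=
  match H with
  | SSeq _ _ => 0
  | SCst r => r
  | SOp o H1 H2 => aop_eval p o (struc_eval p H1) (struc_eval p H2)
  end.

Fixpoint term_subst (R : realType) (F : choiceType) (n : nat)
  (sg : 'I_n -> multiset F * multiset F) (t : term R n) : struc R F :=
  match t with
  | TVar i => SSeq (sg i).1 (sg i).2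
  | TCst r => SCst r
  | TOp o t1 t2 => SOp o (term_subst sg t1) (term_subst sg t2)
  end.

(* a calculus = set of rule instances (premise structure, conclusion structure) *)
Definition calculus (R : realType) (F : choiceType) := struc R F -> struc R F -> Prop.

(* all structures occurring in rules are p-structures: constants in [0,oo] *)
Definition calc_wf (R : realType) (F : choiceType) (C : calculus R F) : Prop :=
  forall H H', C H H' -> struc_nonneg H /\ struc_nonneg H'.

Definition counary (R : realType) (F : choiceType) (C : calculus R F) : Prop :=
  forall H H', C H H' -> exists G D, H' = SSeq G D.

Definition has_EFQ (R : realType) (F : choiceType) (C : calculus R F) : Prop :=
  forall G D : multiset F, C (SCst 0) (SSeq G D).

(* derivations: deriv C H K means there is a derivation with top H, bottom K *)
Inductive deriv (R : realType) (F : choiceType) (C : calculus R F)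
  : struc R F -> struc R F -> Prop :=
  | d_id H : deriv C H H
  | d_rule H H' : C H H' -> deriv C H H'
  | d_comp H I K : deriv C H I -> deriv C I K -> deriv C H K
  | d_op o H1 K1 H2 K2 : deriv C H1 K1 -> deriv C H2 K2 ->
      deriv C (SOp o H1 H2) (SOp o K1 K2).

Definition validities (R : realType) (F : choiceType) (p : \bar R)
  (C : calculus R F) (K : struc R F) : set (\bar R) :=
  [set x | exists H, closed H /\ deriv C H K /\ x = struc_eval p H].

Definition provability (R : realType) (F : choiceType) (p : \bar R)
  (C : calculus R F) (K : struc R F) : \bar R :=
  if pselect (validities p C K = set0) is left _ then 0
  else ereal_sup (validities p C K).

Definition add_rule (R : realType) (F : choiceType) (C N : calculus R F) : calculus R F :=
  fun H H' => C H H' \/ N H H'.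

Definition admissible (R : realType) (F : choiceType) (p : \bar R)
  (C N : calculus R F) : Prop :=
  forall K : struc R F, struc_nonneg K ->
    provability p (add_rule C N) K = provability p C K.

Definition term_rule (R : realType) (F : choiceType) (n : nat) (t s : term R n)
  : calculus R F :=
  fun H H' => exists sg : 'I_n -> multiset F * multiset F,
    H = term_subst sg t /\ H' = term_subst sg s.

(* Main.v *)
Require Import Defs.
From HB Require Import structures.
From mathcomp Require Import all_boot all_order all_algebra.
From mathcomp Require Import finmap multiset.
From mathcomp Require Import boolp classical_sets reals constructive_ereal ereal exp.
Set Implicit Arguments. Unset Strict Implicit.
Import Order.TTheory GRing.Theory Num.Theory.
Local Open Scope ring_scope.
Local Open Scope ereal_scope.

Section Sem.
Variable R : realType.
Implicit Types a b c d : \bar R.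

Lemma ainv_ge0 a : 0 <= a -> 0 <= ainv a.
Proof.
case: a => [x||] //= x0; case: ifP => // /negbT xn0.
by rewrite lee_fin invr_ge0 -lee_fin.
Qed.

Lemma ainv_anti a b : 0 <= a -> a <= b -> ainv b <= ainv a.
Proof.
case: a => [x||]; case: b => [y||] //= x0 xy.
- rewrite !lee_fin in x0 xy *.
  case: ifP => [/eqP y0|/negbT yn0].
    have -> : x = 0%R by apply/eqP; rewrite eq_le x0 -y0 xy.
    by rewrite eqxx.
  case: ifP => [_|/negbT xn0]; first by rewrite leey.
  have xp : (0 < x)%R by rewrite lt0r xn0.
  rewrite lee_fin lef_pV2 ?posrE //.
  exact: lt_le_trans xy.
- by case: ifP => // _; rewrite lee_fin invr_ge0 -lee_fin.

Qed.

Lemma atens_ge0 a b : 0 <= a -> 0 <= b -> 0 <= atens a b.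
Proof. by move=> a0 b0; rewrite /atens; case: ifP => // _; exact: mule_ge0. Qed.

Lemma atens_mono a b c d : 0 <= a -> 0 <= b -> a <= c -> b <= d ->
  atens a b <= atens c d.
Proof.
move=> a0 b0 ac bd; rewrite /atens.
case: ifP => [_|/negbT]; first by apply: atens_ge0; [exact: le_trans ac|exact: le_trans bd].
rewrite negb_or => /andP[an0 bn0].
have cn0 : (c == 0) = false.
  apply/negbTE; apply: contra an0 => /eqP c0; rewrite eq_le a0 andbT -c0 //.
have dn0 : (d == 0) = false.
  apply/negbTE; apply: contra bn0 => /eqP d0; rewrite eq_le b0 andbT -d0 //.
by rewrite cn0 dn0 /=; apply: lee_pmul.
Qed.

Lemma apar_ge0 a b : 0 <= a -> 0 <= b -> 0 <= apar a b.
Proof. by move=> a0 b0; apply/ainv_ge0/atens_ge0; exact: ainv_ge0. Qed.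

Lemma apar_mono a b c d : 0 <= a -> 0 <= b -> a <= c -> b <= d ->
  apar a b <= apar c d.
Proof.
move=> a0 b0 ac bd; rewrite /apar; apply: ainv_anti.
  by apply: atens_ge0; apply: ainv_ge0; [exact: le_trans ac|exact: le_trans bd].
have c0 : 0 <= c by exact: le_trans ac.
have d0 : 0 <= d by exact: le_trans bd.
by apply: atens_mono; [exact: ainv_ge0|exact: ainv_ge0|exact: ainv_anti|exact: ainv_anti].
Qed.

Lemma apow_ge0 a q : 0 <= a -> 0 <= apow a q.
Proof. by case: a => [x||] //= _; rewrite lee_fin powR_ge0. Qed.

Lemma apow_mono a b q : (0 <= q)%R -> 0 <= a -> a <= b -> apow a q <= apow b q.
Proof.
move=> q0; case: a => [x||]; case: b => [y||] //= x0 xy; rewrite ?leey //.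
rewrite lee_fin; apply: ge0_ler_powR => //; rewrite ?nnegrE -?lee_fin //.
exact: le_trans xy.
Qed.

Lemma asum_ge0 a b : 0 <= a -> 0 <= b -> 0 <= asum a b.
Proof. exact: adde_ge0. Qed.

Lemma asum_mono a b c d : a <= c -> b <= d -> asum a b <= asum c d.
Proof. exact: leeD. Qed.

Lemma ahsum_ge0 a b : 0 <= a -> 0 <= b -> 0 <= ahsum a b.
Proof. by move=> a0 b0; apply/ainv_ge0/asum_ge0; exact: ainv_ge0. Qed.

Lemma ahsum_mono a b c d : 0 <= a -> 0 <= b -> a <= c -> b <= d ->
  ahsum a b <= ahsum c d.
Proof.
move=> a0 b0 ac bd; rewrite /ahsum; apply: ainv_anti.
  by apply: asum_ge0; apply: ainv_ge0; [exact: le_trans ac|exact: le_trans bd].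
by apply: asum_mono; apply: ainv_anti.
Qed.

Variable p : \bar R.
Hypothesis p0 : 0 < p.

Lemma op_ge0 o a b : 0 <= a -> 0 <= b -> 0 <= aop_eval p o a b.
Proof.
move=> a0 b0; case: o => /=; [exact: atens_ge0|exact: apar_ge0| |].
- case: p => [q||] /=; rewrite ?le_max ?a0 //.
  by apply: apow_ge0; apply: asum_ge0; apply: apow_ge0.
- case: p => [q||] /=; rewrite ?le_min ?a0 ?b0 //.
  by apply: apow_ge0; apply: ahsum_ge0; apply: apow_ge0.
Qed.

Lemma op_mono o a b c d : 0 <= a -> 0 <= b -> a <= c -> b <= d ->
  aop_eval p o a b <= aop_eval p o c d.
Proof.
move=> a0 b0 ac bd; case: o => /=; [exact: atens_mono|exact: apar_mono| |].
- move: p0; case: p => [q||] //= q0; last by apply: le_max2.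
  rewrite lte_fin in q0; have q0' := ltW q0.
  apply: apow_mono; first by rewrite invr_ge0.
    by apply: asum_ge0; apply: apow_ge0.
  by apply: asum_mono; apply: apow_mono.
- move: p0; case: p => [q||] //= q0; last by apply: le_min2.
  rewrite lte_fin in q0; have q0' := ltW q0.
  apply: apow_mono; first by rewrite invr_ge0.
    by apply: ahsum_ge0; apply: apow_ge0.
  by apply: ahsum_mono; [apply: apow_ge0|apply: apow_ge0|apply: apow_mono|apply: apow_mono].
Qed.


Variable F : choiceType.

Lemma closed_ge0 (H : struc R F) : Defs.closed H -> struc_nonneg H -> 0 <= struc_eval p H.
Proof.
elim: H => [G D|r|o H1 IH1 H2 IH2] //= [c1 c2] [n1 n2].
by apply: op_ge0; [apply: IH1|apply: IH2].
Qed.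

Lemma nonneg_back (X : calculus R F) H K : calc_wf X -> Defs.deriv X H K ->
  struc_nonneg K -> struc_nonneg H.
Proof.
move=> wf; elim => {H K} [H|H H' /wf []|H I K _ IH1 _ IH2|o H1 K1 H2 K2 _ IH1 _ IH2] //.
- by move=> /IH2 /IH1.
- by move=> /= [/IH1 ? /IH2 ?].
Qed.

Lemma decomp_op (C : calculus R F) H K : counary C -> Defs.deriv C H K ->
  forall o X Y, K = SOp o X Y ->
  exists H1 H2, H = SOp o H1 H2 /\ Defs.deriv C H1 X /\ Defs.deriv C H2 Y.
Proof.
move=> cC; elim => {H K} [H|H H' /cC [G [D ->]]|H I K _ IH1 _ IH2|o' H1 K1 H2 K2 D1 _ D2 _] //.
- move=> o X Y ->; exists X, Y; split => //; split; exact: d_id.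
- move=> o X Y /IH2 [I1 [I2 [EI [D1 D2]]]].
  have [H1 [H2 [-> [E1 E2]]]] := IH1 _ _ _ EI.
  by exists H1, H2; split => //; split; apply: d_comp; eassumption.
- by move=> o X Y [-> <- <-]; exists H1, H2.
Qed.

Lemma decomp_cst (C : calculus R F) H K : counary C -> Defs.deriv C H K ->
  forall r, K = SCst r -> H = SCst r.
Proof.
move=> cC; elim => {H K} [H|H H' /cC [G [D ->]]|H I K _ IH1 _ IH2|o' H1 K1 H2 K2 D1 _ D2 _] //.
by move=> r /IH2 /IH1.
Qed.

Fixpoint tsub {n : nat} (g : 'I_n -> struc R F) (t : term R n) : struc R F :=
  match t with
  | TVar i => g i
  | TCst r => SCst r
  | TOp o t1 t2 => SOp o (tsub g t1) (tsub g t2)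
  end.

Lemma tsub_deriv (C : calculus R F) n (g : 'I_n -> struc R F) sg t :
  (forall i, Defs.deriv C (g i) (SSeq (sg i).1 (sg i).2)) ->
  Defs.deriv C (tsub g t) (term_subst sg t).
Proof.
move=> hg; elim: t => [i|r|o t1 IH1 t2 IH2] /=; [exact: hg|exact: d_id|].
exact: d_op.
Qed.

Lemma tsub_closed n (g : 'I_n -> struc R F) t :
  (forall i, Defs.closed (g i)) -> Defs.closed (tsub g t).
Proof. by move=> hg; elim: t => [i|r|o t1 IH1 t2 IH2] //=. Qed.

Lemma tsub_eval n (g : 'I_n -> struc R F) t :
  struc_eval p (tsub g t) = term_eval p (fun i => struc_eval p (g i)) t.
Proof. by elim: t => [i|r|o t1 IH1 t2 IH2] //=; rewrite IH1 IH2. Qed.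

Lemma term_eval_ge0 n (a : 'I_n -> \bar R) t : (forall i, 0 <= a i) ->
  term_nonneg t -> 0 <= term_eval p a t.
Proof.
move=> ha; elim: t => [i|r|o t1 IH1 t2 IH2] //= [n1 n2].
by apply: op_ge0; [apply: IH1|apply: IH2].
Qed.

Lemma term_eval_mono n (a b : 'I_n -> \bar R) t : (forall i, 0 <= a i) ->
  (forall i, a i <= b i) ->
  term_nonneg t -> term_eval p a t <= term_eval p b t.
Proof.
move=> ha hab; elim: t => [i|r|o t1 IH1 t2 IH2] //= [n1 n2].
by apply: op_mono; [apply: term_eval_ge0|apply: term_eval_ge0|apply: IH1|apply: IH2].
Qed.

Lemma subst_nonneg n (sg : 'I_n -> multiset F * multiset F) t :
  term_nonneg t -> struc_nonneg (term_subst (R:=R) sg t).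
Proof. by elim: t => [i|r|o t1 IH1 t2 IH2] //= [/IH1 ? /IH2 ?]. Qed.

Section Gather.
Variable C : calculus R F.
Hypotheses (wf : calc_wf C) (cC : counary C) (efq : has_EFQ C).
Variable n : nat.
Variable sg : 'I_n -> multiset F * multiset F.

Definition good (g : 'I_n -> struc R F) :=
  forall i, Defs.closed (g i) /\ Defs.deriv C (g i) (SSeq (sg i).1 (sg i).2).

Lemma good_ge0 g : good g -> forall i, 0 <= struc_eval p (g i).
Proof.
move=> hg i; have [c d] := hg i; apply: closed_ge0 => //.
exact: (nonneg_back wf d I).
Qed.

Lemma gather t : term_nonneg t -> forall H', Defs.closed H' ->
  Defs.deriv C H' (term_subst sg t) ->
  exists g, good g /\ struc_eval p H' <= term_eval p (fun i => struc_eval p (g i)) t.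
Proof.
have efqd : forall i, Defs.closed (SCst 0) /\ Defs.deriv C (SCst 0) (SSeq (sg i).1 (sg i).2).
  by move=> i; split => //; apply: d_rule; apply: efq.
elim: t => [i|r|o t1 IH1 t2 IH2] /= tn H' cH dH.
- exists (fun j => if j == i then H' else SCst 0); split; last by rewrite eqxx.
  by move=> j; case: eqP => [->|_] //; exact: efqd.
- have -> := decomp_cst cC dH (erefl _).
  by exists (fun _ => SCst 0); split.
- case: tn => tn1 tn2.
  have [H1 [H2 [EH [D1 D2]]]] := decomp_op cC dH (erefl _).
  subst H'; case: cH => c1 c2.
  have [g1 [gg1 le1]] := IH1 tn1 _ c1 D1.
  have [g2 [gg2 le2]] := IH2 tn2 _ c2 D2.
  pose g j := if struc_eval p (g1 j) <= struc_eval p (g2 j) then g2 j else g1 j.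
  have gg : good g by move=> j; rewrite /g; case: ifP.
  have l1 : forall j, struc_eval p (g1 j) <= struc_eval p (g j).
    by move=> j; rewrite /g; case: ifP.
  have l2 : forall j, struc_eval p (g2 j) <= struc_eval p (g j).
    move=> j; rewrite /g; case: ifP => // /negbT; rewrite -ltNge => /ltW //.
  exists g; split => //=.
  have n1 : 0 <= struc_eval p H1.
    by apply: closed_ge0 => //; apply: (nonneg_back wf D1); apply: subst_nonneg.
  have n2 : 0 <= struc_eval p H2.
    by apply: closed_ge0 => //; apply: (nonneg_back wf D2); apply: subst_nonneg.
  apply: (le_trans (@op_mono o _ _ _ _ n1 n2 le1 le2)).
  apply: op_mono; try apply: term_eval_ge0; try apply: good_ge0; try eassumption.
    exact: term_eval_mono (good_ge0 gg1) l1 tn1.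
  exact: term_eval_mono (good_ge0 gg2) l2 tn2.
Qed.
End Gather.

Lemma deriv_mono (C X : calculus R F) H K : (forall A B, C A B -> X A B) ->
  Defs.deriv C H K -> Defs.deriv X H K.
Proof.
move=> hCX; elim => {H K} [H|H H' /hCX|H I K _ IH1 _ IH2|o H1 K1 H2 K2 _ IH1 _ IH2].
- exact: d_id.
- exact: d_rule.
- exact: d_comp IH1 IH2.
- exact: d_op.
Qed.

Lemma main_sec n (t s : term R n) :
  term_nonneg t -> term_nonneg s ->
  (forall a : 'I_n -> \bar R, (forall i, 0 <= a i) ->
     term_eval p a t <= term_eval p a s) ->
  forall C : calculus R F, calc_wf C -> counary C -> has_EFQ C ->
    admissible p C (@term_rule R F n t s).
Proof.
move=> tn sn hts C wf cC efq K Kn.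
set X := add_rule C (term_rule t s).
have wfX : calc_wf X.
  move=> A B [/wf //|[sg [-> ->]]].
  by split; apply: subst_nonneg.
have lift : forall H K, Defs.deriv X H K -> struc_nonneg K -> forall H',
    Defs.closed H' -> Defs.deriv C H' H ->
    exists K', Defs.closed K' /\ Defs.deriv C K' K /\
      struc_eval p H' <= struc_eval p K'.
  move=> H0 K0; elim => {H0 K0}.
  - by move=> H _ H' cH dH; exists H'.
  - move=> H H0' [CH|[sg [EH EK]]] _ H' cH dH.
      by exists H'; split => //; split => //; apply: d_comp dH (d_rule CH).
    subst H H0'.
    have [g [gg le]] := gather wf cC efq tn cH dH.
    exists (tsub g s); split; first by apply: tsub_closed => i; case: (gg i).
    split; first by apply: tsub_deriv => i; case: (gg i).
    rewrite tsub_eval; apply: le_trans le _; apply: hts.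
    by move=> i; apply: (good_ge0 wf gg i).
  - move=> H I K0 D1 IH1 D2 IH2 Kn0 H' cH dH.
    have In : struc_nonneg I := nonneg_back wfX D2 Kn0.
    have [I' [cI [dI le1]]] := IH1 In H' cH dH.
    have [K' [cK [dK le2]]] := IH2 Kn0 I' cI dI.
    by exists K'; split => //; split => //; apply: le_trans le2.
  - move=> o H1 K1 H2 K2 D1 IH1 D2 IH2 [Kn1 Kn2] H' cH dH.
    have [H1' [H2' [EH [E1 E2]]]] := decomp_op cC dH (erefl _).
    subst H'; case: cH => c1 c2.
    have [K1' [cK1 [dK1 le1]]] := IH1 Kn1 H1' c1 E1.
    have [K2' [cK2 [dK2 le2]]] := IH2 Kn2 H2' c2 E2.
    exists (SOp o K1' K2'); split => //; split; first exact: d_op.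
    apply: op_mono => //; apply: closed_ge0 => //; apply: (nonneg_back wf);
      try eassumption; apply: (nonneg_back wfX); eassumption.
rewrite /provability.
set V1 := validities p X K; set V2 := validities p C K.
have sub : (V2 `<=` V1)%classic.
  move=> x [H [cH [dH ->]]]; exists H; split => //; split => //.
  by apply: deriv_mono dH => A B CA; left.
have dom : forall x, V1 x -> exists2 y, V2 y & x <= y.
  move=> x [H [cH [dH ->]]].
  have [K' [cK [dK le]]] := lift _ _ dH Kn H cH (d_id _ _).
  by exists (struc_eval p K') => //; exists K'.
case: pselect => [E1|N1]; case: pselect => [E2|N2] //.
- exfalso; apply: N2; apply/seteqP; split => // x /sub; by rewrite E1.
- exfalso; apply: N1; apply/seteqP; split => // x /dom [y]; by rewrite E2.
- apply/eqP; rewrite eq_le; apply/andP; split; last exact: ereal_sup_le.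
  apply: ge_ereal_sup => x /dom [y Vy lexy]; apply: (le_trans lexy); exact: ereal_sup_ubound.
Qed.
End Sem.

Theorem mainTheorem4 (R : realType) (F : choiceType) (p : \bar R) (n : nat)
  (t s : term R n) :
  0 < p ->
  term_nonneg t -> term_nonneg s ->
  (forall a : 'I_n -> \bar R, (forall i, 0 <= a i) ->
     term_eval p a t <= term_eval p a s) ->
  forall C : calculus R F, calc_wf C -> counary C -> has_EFQ C ->
    admissible p C (@term_rule R F n t s).
Proof.
move=> p0; exact: main_sec.
Qed.
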